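(* Let $0\le\alpha<n$, $m$ a nonnegative integer, $0<\eta\le1$, $0<\delta<\min\{\eta,(n-\alpha)/m\}$, $1\le r\le\infty$, $\tilde\alpha=m\delta+\alpha$, $\tilde\delta\le\delta$. A pair of weights $(w,v)$ belongs to $\mathbb{H}(r,\tilde\alpha,\tilde\delta)$ if and only if there is $C$ such that the two inequalities $$|B|^{\frac{\tilde\alpha-\tilde\delta}{n}-\frac1r}\Big(\frac{1}{|B|}\int_Bv^{r'}(y)\,dy\Big)^{1/r'}\le C\frac{w(B)}{|B|}\quad\text{(local)}$$ and $$|B|^{\frac{\delta-\tilde\delta}{n}}\Big(\int_{\mathbb{R}^n\setminus B}\frac{v^{r'}(y)}{|x_B-y|^{r'(n-\tilde\alpha+\delta)}}dy\Big)^{1/r'}\le C\frac{w(B)}{|B|}\quad\text{(global)}$$ hold simultaneously for every ball $B\subset\mathbb{R}^n$ with center $x_B$.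
   Context: A weight is a nonnegative locally integrable function; $w(B)=\int_Bw$; $r'$ is the conjugate exponent, and when $r'=\infty$ the $L^{r'}$ averages/integrals are read as $L^\infty$ norms. $(w,v)\in\mathbb{H}(r,\tilde\alpha,\tilde\delta)$ means that for some $C$ and every ball $B$: if $1<r\le\infty$, $|B|^{(\delta-\tilde\delta)/n}\big(\int\frac{v^{r'}(y)}{(|B|^{1/n}+|x_B-y|)^{r'(n-\tilde\alpha+\delta)}}dy\big)^{1/r'}\le C\frac{w(B)}{|B|}$; if $r=1$, $|B|^{(\delta-\tilde\delta)/n}\big\|\frac{v(\cdot)}{(|B|^{1/n}+|x_B-\cdot|)^{n-\tilde\alpha+\delta}}\big\|_\infty\le C\frac{w(B)}{|B|}$. If $m=0$, $(n-\alpha)/m$ is read as $+\infty$. *)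

(* Defs.v *)
From HB Require Import structures.
From mathcomp Require Import all_boot all_order all_algebra.
From mathcomp Require Import all_classical all_reals all_analysis.
Set Implicit Arguments. Unset Strict Implicit. Unset Printing Implicit Defensive.
Import Order.TTheory GRing.Theory Num.Theory.
Import numFieldNormedType.Exports.
Local Open Scope classical_set_scope.
Local Open Scope ring_scope.

(* R^n, as row vectors 'rV[R]_n, equipped with its Borel sigma-algebra
   (generated by the open sets of the product = Euclidean topology). *)
Definition Rn (R : realType) (n : nat) := g_sigma_algebraType (@open 'rV[R]_n).

Section defs.
Context {R : realType} {n : nat}.

Definition enorm (x : 'rV[R]_n) : R := Num.sqrt (\sum_(i < n) (x ord0 i) ^+ 2).

Definition eball (x : 'rV[R]_n) (rho : R) : set (Rn R n) :=
  [set y : 'rV[R]_n | enorm (y - x) < rho].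

Definition box (a b : 'rV[R]_n) : set (Rn R n) :=
  [set y : 'rV[R]_n | forall i, a ord0 i <= y ord0 i < b ord0 i].

(* mu is n-dimensional Lebesgue measure (on Borel sets): it gives every box
   its volume (this determines the measure uniquely on Borel sets). *)
Definition is_lebesgue (mu : {measure set (Rn R n) -> \bar R}) : Prop :=
  forall a b : 'rV[R]_n, (forall i, a ord0 i <= b ord0 i) ->
    mu (box a b) = (\prod_(i < n) (b ord0 i - a ord0 i))%:E.

Definition weight (mu : {measure set (Rn R n) -> \bar R}) (w : Rn R n -> R) : Prop :=
  (forall x, 0 <= w x) /\ measurable_fun setT w /\
  (forall (x : 'rV[R]_n) (rho : R), 0 < rho -> mu.-integrable (eball x rho) (EFin \o w)).

Definition vol (mu : {measure set (Rn R n) -> \bar R}) (B : set (Rn R n)) : R := fine (mu B).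

Definition wavg (mu : {measure set (Rn R n) -> \bar R}) (w : Rn R n -> R) (B : set (Rn R n)) : \bar R :=
  ((\int[mu]_(y in B) (w y)%:E) * ((vol mu B)^-1)%:E)%E.

End defs.

Definition conj_exp {R : realType} (r : \bar R) : \bar R :=
  match r with
  | x%:E => if x == 1 then +oo%E else (x / (x - 1))%:E
  | +oo%E => 1%E
  | -oo%E => 0%E (* junk, never used since r >= 1 *)
  end.

Definition inv_exp {R : realType} (p : \bar R) : R :=
  match p with
  | x%:E => x^-1
  | _ => 0
  end.

(* (n - alpha)/m, read as +oo when m = 0 *)
Definition ratio_bound {R : realType} (n : nat) (alpha : R) (m : nat) : \bar R :=
  if m == 0%N then +oo%E else ((n%:R - alpha) / m%:R)%:E.

Section Hclass.
Context {R : realType} {n : nat}.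
Variable mu : {measure set (Rn R n) -> \bar R}.

(* For r > 1 the L^{r'} norm is (int v^{r'} / (...)^{r'(n-alt+delta)})^{1/r'};
   for r = 1 (r' = +oo) it is the (essential) sup norm, as in the paper. *)
Definition inH (r : \bar R) (alt dt delta : R) (w v : Rn R n -> R) : Prop :=
  exists C : R, forall (xB : 'rV[R]_n) (rho : R), 0 < rho ->
    let B := eball xB rho in
    ((vol mu B `^ ((delta - dt) / n%:R))%:E *
      Lnorm mu (conj_exp r)
        (fun y : Rn R n => (v y / (vol mu B `^ (n%:R^-1) + enorm ((y : 'rV[R]_n) - xB))
                                  `^ (n%:R - alt + delta))%:E)
     <= C%:E * wavg mu w B)%E.

(* local condition:
   |B|^((alt-dt)/n - 1/r) (1/|B| int_B v^{r'})^{1/r'} <= C w(B)/|B|,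
   where (1/|B| int_B v^{r'})^{1/r'} = |B|^{-1/r'} ||v 1_B||_{L^{r'}}, read as the
   L^oo norm of v on B when r' = +oo. *)
Definition local_cond (r : \bar R) (alt dt : R) (w v : Rn R n -> R) (C : R)
    (xB : 'rV[R]_n) (rho : R) : Prop :=
  let B := eball xB rho in
  ((vol mu B `^ ((alt - dt) / n%:R - inv_exp r))%:E *
    ((vol mu B `^ (- inv_exp (conj_exp r)))%:E *
      Lnorm mu (conj_exp r) (fun y : Rn R n => (\1_B y * v y)%:E))
   <= C%:E * wavg mu w B)%E.

(* global condition:
   |B|^((delta-dt)/n) (int_{R^n \ B} v^{r'}(y)/|xB - y|^{r'(n-alt+delta)} dy)^{1/r'} <= C w(B)/|B|,
   read with the L^oo norm on R^n \ B when r' = +oo. *)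
Definition global_cond (r : \bar R) (alt dt delta : R) (w v : Rn R n -> R) (C : R)
    (xB : 'rV[R]_n) (rho : R) : Prop :=
  let B := eball xB rho in
  ((vol mu B `^ ((delta - dt) / n%:R))%:E *
    Lnorm mu (conj_exp r)
      (fun y : Rn R n => (\1_(~` B) y * (v y / enorm (xB - (y : 'rV[R]_n)) `^ (n%:R - alt + delta)))%:E)
   <= C%:E * wavg mu w B)%E.

End Hclass.

(* Main.v *)
Require Import Defs.
From HB Require Import structures.
From mathcomp Require Import all_boot all_order all_algebra.
From mathcomp Require Import all_classical all_reals all_analysis.
From mathcomp Require Import measurable_realfun ess_sup_inf.
From mathcomp Require Import lra ring.
Import Order.TTheory GRing.Theory Num.Theory.
Import numFieldNormedType.Exports.
Local Open Scope classical_set_scope.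
Local Open Scope ring_scope.
Section L.
Context d (T : measurableType d) (R : realType) (mu : {measure set T -> \bar R}).
Local Open Scope ereal_scope.

Lemma Lnorm_mono (p : \bar R) (f g : T -> R) : 1 <= p ->
  measurable_fun setT f -> measurable_fun setT g ->
  (forall x, `|f x| <= `|g x|)%R ->
  Lnorm mu p (EFin \o f) <= Lnorm mu p (EFin \o g).
Proof.
case: p => [p| |] // p1 mf mg fg; rewrite unlock /Lnorm.
- have p0 : (0 < p)%R by rewrite lee_fin in p1; exact: lt_le_trans p1.
  have E h : \int[mu]_x `|(EFin \o h) x| `^ p = \int[mu]_x (`|h x| `^ p)%:E.
    by apply: eq_integral => x _; rewrite /= -poweR_EFin.
  rewrite !E.
  apply: gt0_ler_poweR.
  + by rewrite invr_ge0 ltW.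
  + by rewrite in_itv /= leey andbT integral_ge0 // => x _; rewrite lee_fin powR_ge0.
  + by rewrite in_itv /= leey andbT integral_ge0 // => x _; rewrite lee_fin powR_ge0.
  apply: ge0_le_integral => //.
  + by apply/measurable_EFinP; apply: (measurableT_comp (measurable_powR _)); exact: measurableT_comp.
  + by apply/measurable_EFinP; apply: (measurableT_comp (measurable_powR _)); exact: measurableT_comp.
  + by move=> x _ /=; rewrite lee_fin ge0_ler_powR // ?nnegrE // ltW.
- case: ifPn => // _; apply: le_ess_sup.
  apply/nearW => x /=; by rewrite lee_fin.
Qed.

Lemma LnormZ_ge0 (p : \bar R) (f : T -> R) (c : R) : 1 <= p -> (0 <= c)%R ->
  measurable_fun setT f ->
  Lnorm mu p (EFin \o (fun x => c * f x)%R) = c%:E * Lnorm mu p (EFin \o f).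
Proof.
case: p => [p| |] // p1 c0 mf; rewrite unlock /Lnorm.
- have p0 : (0 < p)%R by rewrite lee_fin in p1; exact: lt_le_trans p1.
  have E h : \int[mu]_x `|(EFin \o h) x| `^ p = \int[mu]_x (`|h x| `^ p)%:E.
    by apply: eq_integral => x _; rewrite /= -poweR_EFin.
  rewrite (E (fun x => c * f x)%R) (E f).
  under eq_integral do rewrite normrM powRM // EFinM.
  rewrite ge0_integralZl_EFin //.
  rewrite poweRM ?lee_fin ?powR_ge0 //; last by rewrite integral_ge0 // => x _; rewrite lee_fin powR_ge0.
  by rewrite poweR_EFin -powRrM mulfV ?gt_eqF // powRr1 ?normr_ge0 // ger0_norm.
  by apply/measurable_EFinP; apply: (measurableT_comp (measurable_powR _)); exact: measurableT_comp.
- case: ifPn => mu0; last by rewrite mule0.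
  rewrite -(ess_supZl _ mu0 c0); apply: eq_ess_sup; apply/nearW => x /=.
  by rewrite normrM ger0_norm.
Qed.
End L.

Section G.
Context (R : realType) (n : nat).

Lemma mcoord (i : 'I_n) : measurable_fun setT (fun y : Rn R n => (y : 'rV[R]_n) ord0 i).
Proof.
apply: (measurability _ (RGenOpens.measurableE R)).
move=> _ [_ [a [b ->] <-]]; apply: sub_sigma_algebra.
rewrite setTI; move: (@coord_continuous R 1 n ord0 i) => /continuousP; apply.
exact: interval_open.
Qed.

Lemma menorm (x : 'rV[R]_n) : measurable_fun setT (fun y : Rn R n => enorm ((y : 'rV[R]_n) - x)).
Proof.
rewrite /enorm.
apply: (measurableT_comp (continuous_measurable_fun (@sqrt_continuous R))).
under eq_fun do under eq_bigr do rewrite !mxE.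
apply: measurable_sum => i; apply: measurable_funX.
apply: measurable_funB; first exact: mcoord.
exact: measurable_cst.
Qed.

Lemma mball (x : 'rV[R]_n) rho : measurable (eball x rho : set (Rn R n)).
Proof.
have := menorm x measurableT _ (measurable_itv `]-oo, rho[).
rewrite setTI; congr measurable; apply/seteqP; split => y /=; rewrite /eball /= in_itv /=; done.
Qed.


Lemma coord_le_enorm (z : 'rV[R]_n) i : `|z ord0 i| <= enorm z.
Proof.
rewrite /enorm -sqrtr_sqr ler_sqrt ?sumr_ge0 // => [|j _]; last exact: sqr_ge0.
rewrite (bigD1 i) //= lerDl sumr_ge0 // => j _; exact: sqr_ge0.
Qed.

Lemma enorm_lt (z : 'rV[R]_n) c rho : 0 < rho ->
  (forall i, `|z ord0 i| <= c) -> n%:R * c ^+ 2 < rho ^+ 2 -> enorm z < rho.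
Proof.
move=> rho0 zc nc.
rewrite /enorm -(ger0_norm (ltW rho0)) -sqrtr_sqr ltr_sqrt ?exprn_gt0 //.
apply: le_lt_trans nc.
apply: (@le_trans _ _ (\sum_(i < n) c ^+ 2)); last first.
  by rewrite sumr_const card_ord mulr_natl.
apply: ler_sum => i _.
have h := zc i; have h0 := normr_ge0 (z ord0 i).
rewrite -real_normK ?num_real //; nra.
Qed.

Lemma enormN (z : 'rV[R]_n) : enorm (- z) = enorm z.
Proof. by rewrite /enorm; congr Num.sqrt; apply: eq_bigr => i _; rewrite mxE sqrrN. Qed.

Lemma mbox (a b : 'rV[R]_n) : measurable (box a b : set (Rn R n)).
Proof.
pose F k : set (Rn R n) := match insub k : option 'I_n with
  | Some i => (fun y : Rn R n => (y : 'rV[R]_n) ord0 i) @^-1` `[a ord0 i, b ord0 i[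
  | None => setT end.
have -> : box a b = \bigcap_(k in setT) F k.
  apply/seteqP; split => y /=.
  - move=> H k _; rewrite /F; case: insubP => [i _ _|_] //=.
    by rewrite in_itv /=; exact: H.
  - move=> H i; move: (H (nat_of_ord i) I); rewrite /F.
    case: insubP => [j _ /val_inj -> /=|]; last by rewrite ltn_ord.
    by rewrite in_itv.
apply: bigcap_measurableType => k _; rewrite /F; case: insubP => [i _ _|_] //=.
have := mcoord i measurableT _ (measurable_itv `[a ord0 i, b ord0 i[).
by rewrite setTI.
Qed.


Lemma vol_ball (mu : {measure set (Rn R n) -> \bar R}) (x : 'rV[R]_n) rho :
  is_lebesgue mu -> (0 < n)%N -> 0 < rho ->
  mu (eball x rho) = (vol mu (eball x rho))%:E /\
  (rho / n%:R) ^+ n <= vol mu (eball x rho) <= (2 * rho) ^+ n.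
Proof.
move=> hL n0 rho0.
have mB := mball x rho.
have N1 : 1 <= (n%:R : R) by rewrite ler1n.
set c := rho / (2 * n%:R).
have c0 : 0 < c by rewrite divr_gt0 // mulr_gt0 // (lt_le_trans ltr01 N1).
have cN : c * (2 * n%:R) = rho by rewrite /c divfK // gt_eqF // mulr_gt0 // (lt_le_trans ltr01 N1).
have up : (mu (eball x rho) <= ((2 * rho) ^+ n)%:E)%E.
  have -> : (2 * rho) ^+ n = \prod_(i < n) ((x + const_mx rho) ord0 i - (x - const_mx rho) ord0 i).
    rewrite (eq_bigr (fun=> 2 * rho)); first by rewrite prodr_const card_ord.
    by move=> i _; rewrite !mxE; lra.
  rewrite -hL; last by move=> i; rewrite !mxE; lra.
  apply: le_measure; rewrite ?inE //; first exact: mbox.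
  move=> y; rewrite /eball /box /= => hy i.
  have := coord_le_enorm (y - x) i; rewrite !mxE => hi.
  have := le_lt_trans hi hy; rewrite ltr_norml => /andP[h1 h2].
  apply/andP; split; lra.
have lo : (((rho / n%:R) ^+ n)%:E <= mu (eball x rho))%E.
  have -> : (rho / n%:R) ^+ n = \prod_(i < n) ((x + const_mx c) ord0 i - (x - const_mx c) ord0 i).
    rewrite (eq_bigr (fun=> rho / n%:R)); first by rewrite prodr_const card_ord.
    move=> i _; rewrite !mxE -cN mulrA mulfK ?gt_eqF ?(lt_le_trans ltr01 N1) //; lra.
  rewrite -hL; last by move=> i; rewrite !mxE; lra.
  apply: le_measure; rewrite ?inE //; first exact: mbox.
  move=> y; rewrite /eball /box /= => hy.
  apply: (@enorm_lt _ c) => //.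
    move=> i; have /andP[h1 h2] := hy i; rewrite !mxE in h1 h2; rewrite !mxE ler_norml; apply/andP; split; lra.
  nra.
have fin : mu (eball x rho) \is a fin_num.
  rewrite ge0_fin_numE ?measure_ge0 //; exact: le_lt_trans up (ltry _).
split; first by rewrite /vol fineK.
by rewrite -!lee_fin /vol fineK // lo up.
Qed.

End G.

Lemma G1 (R : realType) (v X Y : R) : 0 <= v -> 0 < X -> X <= Y -> v / Y <= v / X.
Proof.
move=> v0 X0 XY; apply: ler_wpM2l => //; rewrite lef_pV2 ?posrE //; exact: lt_le_trans XY.
Qed.
Lemma G2 (R : realType) (v X Y : R) : 0 <= v -> 0 < X -> X <= Y -> v <= Y * (v / X).
Proof.
move=> v0 X0 XY; set q := v / X.
have qX : q * X = v by rewrite /q divfK // gt_eqF.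
have q0 : 0 <= q by rewrite /q divr_ge0 // ltW.
nra.
Qed.
Lemma G3 (R : realType) (v X Y k : R) : 0 <= v -> 0 < X -> 0 < Y -> Y <= k * X -> v / X <= k * (v / Y).
Proof.
move=> v0 X0 Y0 YX; set q := v / Y.
have qY : q * Y = v by rewrite /q divfK // gt_eqF.
have q0 : 0 <= q by rewrite /q divr_ge0 // ltW.
rewrite ler_pdivrMr //; nra.
Qed.

Lemma root_pow (R : realType) (n : nat) (a : R) : (0 < n)%N -> 0 <= a -> (a ^+ n) `^ (n%:R^-1) = a.
Proof.
move=> n0 a0; rewrite -powR_mulrn // -powRrM mulfV ?powRr1 //.
by rewrite pnatr_eq0 -lt0n.
Qed.

Section Ball.
Context (R : realType) (n : nat) (mu : {measure set (Rn R n) -> \bar R}).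
Local Open Scope ereal_scope.

Lemma ball_ineqs (v : Rn R n -> R) (xB : 'rV[R]_n) (rho e : R) (p : \bar R) :
  is_lebesgue mu -> (0 < n)%N -> (0 < rho)%R -> (0 <= e)%R -> 1 <= p ->
  (forall y, 0 <= v y)%R -> measurable_fun setT v ->
  let B := eball xB rho in let V := vol mu B in let s := (V `^ (n%:R^-1))%R in
  let H := Lnorm mu p (fun y : Rn R n => (v y / (s + enorm ((y : 'rV[R]_n) - xB)) `^ e)%:E) in
  let L := Lnorm mu p (fun y : Rn R n => (\1_B y * v y)%:E) in
  let G := Lnorm mu p (fun y : Rn R n => (\1_(~` B) y * (v y / enorm (xB - (y : 'rV[R]_n)) `^ e))%:E) in
  (0 < V)%R /\ (rho / n%:R <= s <= 2 * rho)%R /\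
  L <= ((((1 + n%:R) * s) `^ e)%R)%:E * H /\ G <= (((3:R) `^ e)%R)%:E * H /\
  H <= (((s `^ e)^-1)%R)%:E * L + G.
Proof.
move=> hL n0 rho0 e0 p1 v0 mv B V s H L G.
have [muB /andP[Vlo Vhi]] := @vol_ball R n mu xB rho hL n0 rho0.
have N0 : (0 < n%:R :> R)%R by rewrite ltr0n.
have V0 : (0 < V)%R.
  by apply: lt_le_trans Vlo; rewrite exprn_gt0 // divr_gt0.
have [slo shi] : (rho / n%:R <= s /\ s <= 2 * rho)%R.
  split.
  - rewrite -[X in (X <= _)%R](@root_pow _ n) //; last by rewrite divr_ge0 // ltW.
    apply: ge0_ler_powR => //; rewrite ?invr_ge0 ?ler0n // nnegrE ?(ltW V0) //.
    by rewrite exprn_ge0 // divr_ge0 // ltW.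
  - rewrite -[X in (_ <= X)%R](@root_pow _ n) //; last by rewrite mulr_ge0 // ltW.
    apply: ge0_ler_powR => //; rewrite ?invr_ge0 ?ler0n // nnegrE ?(ltW V0) //.
    by rewrite exprn_ge0 // mulr_ge0 // ltW.
have s0 : (0 < s)%R by rewrite powR_gt0.
split => //; split; first by rewrite slo shi.
have mB : measurable B := @mball R n xB rho.
have men := @menorm R n xB.
pose h y := (v y / (s + enorm ((y : 'rV[R]_n) - xB)) `^ e)%R.
pose l y := (\1_B y * v y)%R.
pose g y := (\1_(~` B) y * (v y / enorm (xB - (y : 'rV[R]_n)) `^ e))%R.
have mh : measurable_fun setT h.
  have -> : h = (fun y => v y * (s + enorm ((y : 'rV[R]_n) - xB)) `^ (- e))%R.
    by apply/funext => y; rewrite /h powRN.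
  apply: measurable_funM => //.
  apply: (measurableT_comp (measurable_powR _)).
  by apply: measurable_funD => //; exact: measurable_cst.
have ml : measurable_fun setT l.
  by apply: measurable_funM => //; exact: measurable_indic.
have mg : measurable_fun setT g.
  have -> : g = (fun y => \1_(~` B) y * (v y * (enorm ((y : 'rV[R]_n) - xB)) `^ (- e)))%R.
    by apply/funext => y; rewrite /g powRN -opprB enormN.
  apply: measurable_funM; first by apply: measurable_indic; exact: measurableC.
  apply: measurable_funM => //.
  exact: (measurableT_comp (measurable_powR _)).
have h0 y : (0 <= h y)%R by rewrite /h divr_ge0 // powR_ge0.
have l0 y : (0 <= l y)%R by rewrite /l mulr_ge0 // indicE ler0n.
have g0 y : (0 <= g y)%R by rewrite /g mulr_ge0 ?indicE ?ler0n // divr_ge0 // powR_ge0.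
have D0 y : (0 < s + enorm ((y : 'rV[R]_n) - xB))%R.
  by apply: ltr_wpDr => //; rewrite /enorm sqrtr_ge0.
split.
  rewrite /L /H.
  change (Lnorm mu p (EFin \o l) <= ((((1 + n%:R) * s) `^ e)%R)%:E * Lnorm mu p (EFin \o h)).
  rewrite -LnormZ_ge0 //; last by rewrite powR_ge0.
  apply: Lnorm_mono => //.
    by apply: measurable_funM => //; exact: measurable_cst.
  move=> y; rewrite !ger0_norm ?mulr_ge0 ?powR_ge0 //.
  rewrite /l indicE; have [yB|yB] := boolP (y \in B); last by rewrite mul0r mulr_ge0 ?powR_ge0.
  rewrite mul1r /h; apply: G2 => //; first by rewrite powR_gt0.
  apply: ge0_ler_powR => //.
  - by rewrite nnegrE ltW.
  - by rewrite nnegrE mulr_ge0 ?ltW // addr_ge0 // ler0n.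
  - have : (enorm ((y : 'rV[R]_n) - xB) < rho)%R by move: yB; rewrite inE.
    have := slo; rewrite ler_pdivrMr // => hs; lra.
  - by rewrite invr_ge0 powR_ge0.
split.
  rewrite /G /H.
  change (Lnorm mu p (EFin \o g) <= (((3:R) `^ e)%R)%:E * Lnorm mu p (EFin \o h)).
  rewrite -LnormZ_ge0 //.
  apply: Lnorm_mono => //.
    by apply: measurable_funM => //; exact: measurable_cst.
  move=> y; rewrite !ger0_norm ?mulr_ge0 ?invr_ge0 ?powR_ge0 //.
  rewrite /g indicE; have [yB|yB] := boolP (y \in ~` B); last by rewrite mul0r mulr_ge0 ?powR_ge0.
  have : (rho <= enorm ((y : 'rV[R]_n) - xB))%R.
    by move: yB; rewrite inE /= /B /eball /= => /negP; rewrite -leNgt.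
  move=> hy; have en0 : (0 < enorm ((y : 'rV[R]_n) - xB))%R by exact: lt_le_trans rho0 hy.
  rewrite (_ : true%:R = 1%R) // mul1r /h -opprB enormN; apply: G3 => //; rewrite ?powR_gt0 //.
  rewrite -powRM ?ler0n //; last exact: ltW.
  apply: ge0_ler_powR => //.
  - by rewrite nnegrE ltW.
  - by rewrite nnegrE mulr_ge0 ?ltW.
  - lra.
rewrite /H /L /G.
change (Lnorm mu p (EFin \o h) <= (((s `^ e)^-1)%R)%:E * Lnorm mu p (EFin \o l) + Lnorm mu p (EFin \o g)).
have k0 : (0 <= (s `^ e)^-1)%R by rewrite invr_ge0 powR_ge0.
have mkl : measurable_fun setT (fun y => (s `^ e)^-1 * l y)%R.
  by apply: measurable_funM => //; exact: measurable_cst.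
rewrite -LnormZ_ge0 //.
apply: le_trans (@eminkowski _ _ _ mu (fun y => (s `^ e)^-1 * l y)%R g p mkl mg p1).
apply: Lnorm_mono => //; first exact: measurable_funD.
move=> y /=; rewrite !ger0_norm ?addr_ge0 ?mulr_ge0 ?invr_ge0 ?powR_ge0 //.
rewrite /l /g !indicE in_setC; have [yB|yB] := boolP (y \in B) => /=.
- rewrite ?mul1r ?mul0r ?addr0 mulrC /h.
  apply: G1; [by [] | by rewrite powR_gt0 |].
  apply: ge0_ler_powR => //.
  + by rewrite nnegrE ltW.
  + by rewrite nnegrE ltW // D0.
  + by rewrite lerDl /enorm sqrtr_ge0.
- rewrite ?mul1r ?mul0r ?mulr0 ?add0r /h.
  have hy : (rho <= enorm ((y : 'rV[R]_n) - xB))%R.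
    rewrite leNgt; apply/negP => hlt; move/negP: yB; apply; rewrite inE.
    exact: hlt.
  have en0 : (0 < enorm ((y : 'rV[R]_n) - xB))%R by exact: lt_le_trans rho0 hy.
  rewrite (_ : enorm (xB - (y : 'rV[R]_n)) = enorm ((y : 'rV[R]_n) - xB)); last by rewrite -opprB enormN.
  apply: G1; [by [] | by rewrite powR_gt0 |].
  apply: ge0_ler_powR => //.
  + by rewrite nnegrE ltW.
  + by rewrite nnegrE ltW // D0.
  + by rewrite lerDr ltW.
Qed.
End Ball.

Lemma conj_exp_ge1 (R : realType) (r : \bar R) : (1 <= r)%E -> (1 <= conj_exp r)%E.
Proof.
case: r => [x| |] //= x1.
case: ifPn => [_|x1']; first exact: leey.
rewrite lee_fin in x1; have x1s : 1 < x by rewrite lt_neqAle eq_sym x1' x1.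
by rewrite lee_fin ler_pdivlMr ?subr_gt0 //; lra.
Qed.

Lemma inv_exp_conj (R : realType) (r : \bar R) : (1 <= r)%E -> inv_exp r + inv_exp (conj_exp r) = 1.
Proof.
case: r => [x| |] //= x1; last by rewrite invr1 add0r.
case: ifPn => [/eqP ->|x1']; first by rewrite invr1 addr0.
rewrite lee_fin in x1; have x1s : 1 < x by rewrite lt_neqAle eq_sym x1' x1.
rewrite /= invf_div; field; rewrite ?subr_eq0 ?gt_eqF //; lra.
Qed.

Lemma exps (R : realType) (V N e ir ir' a dt d : R) : 0 < V -> 0 < N -> ir + ir' = 1 ->
  e = N - a + d ->
  V `^ ((a - dt) / N - ir) * V `^ (- ir') = V `^ ((d - dt) / N) * ((V `^ (N^-1)) `^ e)^-1.
Proof.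
move=> V0 N0 hi he.
have V0' : V != 0 by rewrite gt_eqF.
rewrite -powRrM -powRN -!powRD ?V0' ?implybT //; congr (powR V _).
have -> : ir' = 1 - ir by lra.
by rewrite he; field; rewrite gt_eqF.
Qed.

Theorem lemma3p4 (R : realType) (n m : nat) (alpha eta delta dt : R) (r : \bar R)
    (mu : {measure set (Rn R n) -> \bar R}) (w v : Rn R n -> R) :
  is_lebesgue mu ->
  0 <= alpha -> alpha < n%:R ->
  0 < eta -> eta <= 1 ->
  0 < delta -> (delta%:E < Order.min eta%:E (ratio_bound n alpha m))%E ->
  (1 <= r)%E ->
  dt <= delta ->
  weight mu w -> weight mu v ->
  (inH mu r (m%:R * delta + alpha) dt delta w v <->
   exists C : R, forall (xB : 'rV[R]_n) (rho : R), 0 < rho ->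
     local_cond mu r (m%:R * delta + alpha) dt w v C xB rho /\
     global_cond mu r (m%:R * delta + alpha) dt delta w v C xB rho).
Proof.
move=> hL a0 an eta0 eta1 d0 dmin r1 dtd [w0 [mw iw]] [v0 [mv iv]].
have n0 : (0 < n)%N.
  by rewrite lt0n; apply/eqP => n0; move: an; rewrite n0; lra.
have N0 : (0 < n%:R :> R) by rewrite ltr0n.
set e := n%:R - (m%:R * delta + alpha) + delta.
have e0 : 0 <= e.
  move: dmin; rewrite lt_min => /andP[_]; rewrite /ratio_bound.
  case: eqP => [m0|/eqP m0]; first by rewrite /e m0 mul0r add0r => _; lra.
  rewrite lte_fin ltr_pdivlMr; last by rewrite ltr0n lt0n.
  rewrite /e; lra.
have p1 := @conj_exp_ge1 R r r1.
have ie := @inv_exp_conj R r r1.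
have Wfin xB rho : 0 < rho -> exists Wr, wavg mu w (eball xB rho) = Wr%:E.
  move=> rho0; rewrite /wavg.
  have Wf : (\int[mu]_(y in eball xB rho) (w y)%:E)%E \is a fin_num.
    by apply: integrable_fin_num; [exact: mball | exact: iw].
  by exists (fine (\int[mu]_(y in eball xB rho) (w y)%:E)%E * (vol mu (eball xB rho))^-1); rewrite -(fineK Wf).
have hexp V : 0 < V -> V `^ ((m%:R * delta + alpha - dt) / n%:R - inv_exp r) * V `^ (- inv_exp (conj_exp r))
    = V `^ ((delta - dt) / n%:R) * ((V `^ (n%:R^-1)) `^ e)^-1.
  by move=> V0; apply: exps.
split.
- case=> C0 HC.
  exists (((1 + n%:R) `^ e + 3 `^ e) * C0) => xB rho rho0.
  have := @ball_ineqs R n mu v xB rho e (conj_exp r) hL n0 rho0 e0 p1 v0 mv.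
  move=> /= [V0 [/andP[slo shi] [hl [hg hh]]]].
  have := HC xB rho rho0 => /=.
  have [Wr WE] := Wfin xB rho rho0.
  rewrite /local_cond /global_cond /=.
  set V := vol mu (eball xB rho).
  set s := V `^ (n%:R^-1).
  set H := Lnorm mu (conj_exp r) _.
  move=> HB.
  have s0 : 0 < s by rewrite powR_gt0.
  have H0 : (0 <= H)%E by apply: Lnorm_ge0.
  have K1 : (1 + n%:R) `^ e <= (1 + n%:R) `^ e + 3 `^ e by rewrite lerDl powR_ge0.
  have K2 : 3 `^ e <= (1 + n%:R) `^ e + 3 `^ e by rewrite lerDr powR_ge0.
  have CH0 : (0 <= (V `^ ((delta - dt) / n%:R))%:E * H)%E by rewrite mule_ge0 // lee_fin powR_ge0.
  split.
  + rewrite muleA -EFinM hexp //.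
    apply: (le_trans (lee_wpmul2l _ hl)); first by rewrite lee_fin mulr_ge0 ?invr_ge0 ?powR_ge0.
    rewrite muleA -EFinM.
    have -> : V `^ ((delta - dt) / n%:R) * (s `^ e)^-1 * ((1 + n%:R) * s) `^ e
        = (1 + n%:R) `^ e * V `^ ((delta - dt) / n%:R).
      rewrite powRM ?addr_ge0 ?ler0n ?(ltW s0) //; field; by rewrite gt_eqF // powR_gt0.
    rewrite EFinM -muleA.
    apply: (le_trans (lee_wpmul2r CH0 (_ : _ <= (((1 + n%:R) `^ e + 3 `^ e)%:E))%E)); first by rewrite lee_fin.
    rewrite EFinM -muleA; apply: lee_wpmul2l => //.
  + apply: (le_trans (lee_wpmul2l _ hg)); first by rewrite lee_fin powR_ge0.
    rewrite muleCA.
    apply: (le_trans (lee_wpmul2r CH0 (_ : _ <= (((1 + n%:R) `^ e + 3 `^ e)%:E))%E)); first by rewrite lee_fin.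
    rewrite EFinM -muleA; apply: lee_wpmul2l => //.
- case=> C0 HC.
  exists (C0 + C0) => xB rho rho0.
  have := @ball_ineqs R n mu v xB rho e (conj_exp r) hL n0 rho0 e0 p1 v0 mv.
  move=> /= [V0 [/andP[slo shi] [hl [hg hh]]]].
  have := HC xB rho rho0 => /=.
  have [Wr WE] := Wfin xB rho rho0.
  rewrite /local_cond /global_cond /=.
  set V := vol mu (eball xB rho).
  set s := V `^ (n%:R^-1).
  set L := Lnorm mu (conj_exp r) (fun y => (\1_(eball xB rho) y * v y)%:E).
  set G := Lnorm mu (conj_exp r) _.
  move=> [HL HG].
  apply: (le_trans (lee_wpmul2l _ hh)); first by rewrite lee_fin powR_ge0.
  rewrite ge0_muleDr; last 2 first.
    by rewrite mule_ge0 ?lee_fin ?invr_ge0 ?powR_ge0 //; apply: Lnorm_ge0.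
    by apply: Lnorm_ge0.
  rewrite muleA -EFinM -hexp // EFinM -muleA.
  apply: (le_trans (leeD HL HG)).
  by rewrite WE -!EFinM -EFinD mulrDl.
Qed.
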